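(* Let $X$ be a Banach space, $T$ an arbitrary nonempty index set, and $f_t:X\to\mathbb{R}\cup\{+\infty\}$ $(t\in T)$ convex functions. Then the (upper) infinite sum function $\overline{\sum_{t\in T}} f_t : X\to[-\infty,+\infty]$ is convex.
   Context: Let $\mathcal{F}(T)$ denote the family of all finite subsets of $T$, directed by inclusion. For a net $\{\alpha_S\}_{S\in\mathcal{F}(T)}\subset[-\infty,+\infty]$, $\limsup_{S\uparrow T,|S|<\infty}\alpha_S:=\inf_{S_0\in\mathcal{F}(T)}\sup_{S\in\mathcal{F}(T),\,S_0\subset S}\alpha_S$. The infinite (upper) sum is defined by $\big(\overline{\sum_{t\in T}} f_t\big)(x):=\limsup_{S\uparrow T,|S|<\infty}\sum_{t\in S} f_t(x)$ for $x\in X$. A function with values in $[-\infty,+\infty]$ is convex if its epigraph $\{(x,\mu)\in X\times\mathbb{R}: f(x)\le\mu\}$ is convex. *)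

(* Defs.v *)
From HB Require Import structures.
From mathcomp Require Import all_boot all_order all_algebra.
From mathcomp Require Import all_classical all_reals all_analysis.
Set Implicit Arguments. Unset Strict Implicit. Unset Printing Implicit Defensive.
Import Order.TTheory GRing.Theory Num.Theory.
Local Open Scope classical_set_scope.
Local Open Scope ring_scope.
Local Open Scope ereal_scope.

Definition epigraph (R : realType) (X : lmodType R) (f : X -> \bar R) : set (X * R) :=
  [set p | f p.1 <= p.2%:E].

Definition convex_set_XR (R : realType) (X : lmodType R) (E : set (X * R)) : Prop :=
  forall p q : X * R, forall l : R, (0 <= l <= 1)%R -> E p -> E q ->
    E ((l *: p.1 + (1 - l) *: q.1)%R, (l * p.2 + (1 - l) * q.2)%R).

Definition convex_efun (R : realType) (X : lmodType R) (f : X -> \bar R) : Prop :=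
  convex_set_XR (epigraph f).

(* upper infinite sum: limsup over the net of finite subsets S of T, directed by inclusion,
   of the finite sums \sum_(t in S) f t x, i.e.
   inf_{S0 finite} sup_{S finite, S0 <= S} \sum_{t in S} f t x *)
Definition upper_infsum (R : realType) (T : choiceType) (X : Type)
    (f : T -> X -> \bar R) (x : X) : \bar R :=
  ereal_inf [set ereal_sup [set \sum_(t \in S) f t x
                             | S in [set S : set T | finite_set S /\ S0 `<=` S]]
            | S0 in [set S0 : set T | finite_set S0]].

(* Main.v *)
Require Import Defs.
From HB Require Import structures.
From mathcomp Require Import all_boot all_order all_algebra.
From mathcomp Require Import all_classical all_reals all_analysis.
From mathcomp Require Import ring lra.
Import Order.TTheory GRing.Theory Num.Theory.
Local Open Scope classical_set_scope.
Local Open Scope ring_scope.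
Local Open Scope ereal_scope.

Lemma term_fin (R : realType) (T : choiceType) (S : set T) (F : T -> \bar R) t :
  finite_set S -> (forall t, F t != -oo) -> \sum_(i \in S) F i < +oo -> S t ->
  F t \is a fin_num.
Proof.
move=> finS Fn Sl St; rewrite fin_numE Fn /=; apply/eqP => Fy.
move: Sl; rewrite fsbig_finite // (_ : \sum_(i <- _) F i = +oo) ?ltxx //.
apply/esum_eqyP; first by move=> i _; exact: Fn.
by exists t; split => //; rewrite in_fset_set // inE.
Qed.

Theorem proposition2p1 (R : realType) (X : completeNormedModType R)
    (T : choiceType) (t0 : T) (f : T -> X -> \bar R)
    (f_noninf : forall t x, f t x != -oo)
    (f_convex : forall t, convex_efun (f t)) :
  convex_efun (upper_infsum f).
Proof.
move=> [x a] [y b] l /andP[l0 l1]; rewrite /epigraph /= => Ux Uy.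
set z := (l *: x + (1 - l) *: y)%R.
have l0' : (0 <= 1 - l)%R by rewrite subr_ge0.
apply/lee_addgt0Pr => e e0.
have [Ax [S1 fS1 <-] AxS1] : exists2 A, [set ereal_sup [set \sum_(t \in S) f t x
                             | S in [set S : set T | finite_set S /\ S0 `<=` S]]
            | S0 in [set S0 : set T | finite_set S0]] A & A < (a + e)%:E.
  apply: ereal_inf_lt; apply: le_lt_trans Ux _; rewrite lte_fin ltrDl //.
have [Ay [S2 fS2 <-] AyS2] : exists2 A, [set ereal_sup [set \sum_(t \in S) f t y
                             | S in [set S : set T | finite_set S /\ S0 `<=` S]]
            | S0 in [set S0 : set T | finite_set S0]] A & A < (b + e)%:E.
  apply: ereal_inf_lt; apply: le_lt_trans Uy _; rewrite lte_fin ltrDl //.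
have fS0 : finite_set (S1 `|` S2) by rewrite finite_setU; split; [exact: fS1|exact: fS2].
apply: le_trans (ereal_inf_lbound _) _.
  by exists (S1 `|` S2) => //.
apply: ub_ereal_sup => _ [S [fS sub] <-].
have sx : \sum_(t \in S) f t x < (a + e)%:E.
  apply: le_lt_trans AxS1; apply: ereal_sup_ubound; exists S => //; split => //.
  by apply: subset_trans sub; exact: subsetUl.
have sy : \sum_(t \in S) f t y < (b + e)%:E.
  apply: le_lt_trans AyS2; apply: ereal_sup_ubound; exists S => //; split => //.
  by apply: subset_trans sub; exact: subsetUr.
have fx t : S t -> f t x \is a fin_num.
  move=> St; apply: (@term_fin R T S (fun t => f t x) t fS) => //; apply: lt_trans sx _; exact: ltry.
have fy t : S t -> f t y \is a fin_num.
  move=> St; apply: (@term_fin R T S (fun t => f t y) t fS) => //; apply: lt_trans sy _; exact: ltry.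
have ex : \sum_(t \in S) f t x = (\sum_(t \in S) fine (f t x))%:E.
  by rewrite -fsumEFin //; apply: eq_fsbigr => t /[1!inE] St; rewrite fineK // fx.
have ey : \sum_(t \in S) f t y = (\sum_(t \in S) fine (f t y))%:E.
  by rewrite -fsumEFin //; apply: eq_fsbigr => t /[1!inE] St; rewrite fineK // fy.
apply: le_trans (_ : (\sum_(t \in S) (l * fine (f t x) + (1 - l) * fine (f t y))%R)%:E <= _).
  rewrite -fsumEFin //; apply: lee_fsum => // t St.
  have := f_convex t (x, fine (f t x)) (y, fine (f t y)) l.
  rewrite /epigraph /=; apply; first by rewrite l0 l1.
    by rewrite fineK // fx.
  by rewrite fineK // fy.
rewrite fsbig_split // -!mulr_fsumr -EFinD lee_fin.
move: sx sy; rewrite ex ey !lte_fin => sx sy.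
have h1 := ler_wpM2l l0 (ltW sx).
have h2 := ler_wpM2l l0' (ltW sy).
apply: le_trans (lerD h1 h2) _.
by rewrite le_eqVlt; apply/orP; left; apply/eqP; ring.
Qed.
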